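(* Let $\lambda\in\mathbb R$ and let $\xi$ be a pseudo symmetric measure. Let $\ell=(1,\lambda,\lambda)'$, $\ell_2=(0,1,1)'$, $Q_{\xi,2}=\ell_2'V_\xi\ell_2$ and $q_{\xi,2}^*=\ell'V_\xi\ell-(\ell'V_\xi\ell_2)^2\,Q_{\xi,2}^+$ (where $a^+=1/a$ for $a\ne0$ and $0^+=0$). Then for every $\tau\in\mathcal T$ the eigenvalues of $\tilde C_\xi(\tau)$, counted with multiplicity, are $0$ (multiplicity $1$), $(t-1)^{-1}q_{\xi,2}^*$ (multiplicity $1$) and $(t-1)^{-1}\ell'V_\xi\ell$ (multiplicity $t-2$). Moreover $q_{\xi,2}^*\le\ell'V_\xi\ell$.
   Context: Fix integers $k\ge 2$ and $t\ge 2$. Let $\mathcal S$ be the set of all $t^k$ sequences $s=(t_1,\dots,t_k)$ with entries $t_j\in\{1,\dots,t\}$. For $s\in\mathcal S$ let $T_s$ be the $k\times t$ matrix with $(j,i)$ entry equal to $1$ if $t_j=i$ and $0$ otherwise; let $H$ be the $k\times k$ matrix with $(i,j)$ entry $1$ if $i\equiv j+1\pmod k$ and $0$ otherwise; put $L_s=HT_s$, $R_s=H'T_s$ (a prime denotes transpose). Let $\Sigma$ be a fixed $k\times k$ positive definite matrix, $1_k$ the all-ones vector, and $\tilde B=\Sigma^{-1}-\Sigma^{-1}1_k1_k'\Sigma^{-1}/(1_k'\Sigma^{-1}1_k)$. With $G_0=T_s,G_1=L_s,G_2=R_s$ define for $0\le i,j\le 2$ the $t\times t$ matrices $C_{sij}=G_i'\tilde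 BG_j$. A measure is a vector $\xi=(p_s)_{s\in\mathcal S}$ with $p_s\ge0$, $\sum_sp_s=1$. Put $C_{\xi ij}=\sum_sp_sC_{sij}$, $c_{\xi ij}=\operatorname{tr}(C_{\xi ij})$, $V_\xi=(c_{\xi ij})_{0\le i,j\le2}$. The measure $\xi$ is pseudo symmetric if each $C_{\xi ij}$ is completely symmetric, i.e. of the form $aI_t+bJ_t$ with $J_t$ the all-ones matrix. $M^+$ denotes the Moore–Penrose inverse. For $u,w\in\mathbb R^3$ (coordinates indexed $0,1,2$) let $C_\xi[u,w]=\sum_{i,j=0}^2u_iw_jC_{\xi ij}$. Let $\mathcal T=\{x\in\mathbb R^t:1_t'x=0,\ x\ne0\}$. For $u\in\mathbb R^3$, vectors $w_1,\dots,w_m\in\mathbb R^3$ ($m\in\{1,2\}$) and $x\in\mathcal T$ define $\mathcal I_\xi(u;w_1,\dots,w_m;x)=C_\xi[u,u]-F'G^+F$, where $F$ is the $m\times t$ matrix whose $a$-th row is $(C_\xi[u,w_a]x)'$ and $G$ is the $m\times m$ matrix with entries $x'C_\xi[w_a,w_b]x$. Undirectional model: the information matrix of $\xi$ for the direct treatment effect is $\tilde C_\xi(\tau)=\mathcal I_\xi(\ell;\ell_2;\tau)$, $\tau\in\mathcal T$, with $\ell=(1,\lambda,\lambda)'$, $\ell_2=(0,1,1)'$. *)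

(* Defs.v *)
From HB Require Import structures.
From mathcomp Require Import all_boot all_order all_algebra.
Set Implicit Arguments. Unset Strict Implicit. Unset Printing Implicit Defensive.
Import Order.TTheory GRing.Theory Num.Theory.
Local Open Scope ring_scope.

Section Defs.
Variables (R : realFieldType) (k t : nat).

(* sequences s = (t_1,...,t_k), entries in {1..t} encoded 0-based as 'I_t *)
Definition seqT := {ffun 'I_k -> 'I_t}.

Definition Tmat (s : seqT) : 'M[R]_(k, t) :=
  \matrix_(j < k, i < t) (if s j == i then 1 else 0).

Definition Hmat : 'M[R]_k :=
  \matrix_(i < k, j < k) (if (i %% k == j.+1 %% k)%N then 1 else 0).

Definition Lmat (s : seqT) : 'M[R]_(k, t) := Hmat *m Tmat s.
Definition Rmat (s : seqT) : 'M[R]_(k, t) := Hmat^T *m Tmat s.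

Definition Gmat (s : seqT) (i : 'I_3) : 'M[R]_(k, t) :=
  if (i : nat) == 0%N then Tmat s else if (i : nat) == 1%N then Lmat s else Rmat s.

Definition ones (n : nat) : 'cV[R]_n := const_mx 1.

Definition Btilde (Sigma : 'M[R]_k) : 'M[R]_k :=
  invmx Sigma - ((((ones k)^T *m invmx Sigma *m ones k) 0 0)^-1)
                  *: (invmx Sigma *m ones k *m (ones k)^T *m invmx Sigma).

Definition Cs (Sigma : 'M[R]_k) (s : seqT) (i j : 'I_3) : 'M[R]_t :=
  (Gmat s i)^T *m Btilde Sigma *m Gmat s j.

Definition is_measure (p : {ffun seqT -> R}) : Prop :=
  (forall s, 0 <= p s) /\ \sum_s p s = 1.

Definition Cxi (Sigma : 'M[R]_k) (p : {ffun seqT -> R}) (i j : 'I_3) : 'M[R]_t :=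
  \sum_s p s *: Cs Sigma s i j.

Definition Vxi (Sigma : 'M[R]_k) (p : {ffun seqT -> R}) : 'M[R]_3 :=
  \matrix_(i < 3, j < 3) \tr (Cxi Sigma p i j).

Definition completely_symmetric (A : 'M[R]_t) : Prop :=
  exists a b : R, A = a%:M + b *: const_mx 1.

Definition pseudo_symmetric (Sigma : 'M[R]_k) (p : {ffun seqT -> R}) : Prop :=
  forall i j : 'I_3, completely_symmetric (Cxi Sigma p i j).

Definition Cuw (Sigma : 'M[R]_k) (p : {ffun seqT -> R}) (u w : 'cV[R]_3) : 'M[R]_t :=
  \sum_(i < 3) \sum_(j < 3) (u i 0 * w j 0) *: Cxi Sigma p i j.

(* Moore-Penrose inverse of a scalar (1x1 matrix): a^+ = 1/a, 0^+ = 0 *)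
Definition pinv1 (a : R) : R := if a == 0 then 0 else a^-1.

(* I_xi(u; w; x) for m = 1 :  C[u,u] - F' G^+ F *)
Definition Ixi1 (Sigma : 'M[R]_k) (p : {ffun seqT -> R}) (u w : 'cV[R]_3)
    (x : 'cV[R]_t) : 'M[R]_t :=
  let F : 'rV[R]_t := (Cuw Sigma p u w *m x)^T in
  let G : R := (x^T *m Cuw Sigma p w w *m x) 0 0 in
  Cuw Sigma p u u - F^T *m ((pinv1 G) *: F).

Definition ellv (lambda : R) : 'cV[R]_3 := \col_(i < 3) (if (i : nat) == 0%N then 1 else lambda).
Definition ell2 : 'cV[R]_3 := \col_(i < 3) (if (i : nat) == 0%N then 0 else 1).

Definition Ctilde (Sigma : 'M[R]_k) (p : {ffun seqT -> R}) (lambda : R)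
    (tau : 'cV[R]_t) : 'M[R]_t :=
  Ixi1 Sigma p (ellv lambda) ell2 tau.

Definition qform (V : 'M[R]_3) (u w : 'cV[R]_3) : R := (u^T *m V *m w) 0 0.

Definition in_calT (x : 'cV[R]_t) : Prop := (ones t)^T *m x = 0 /\ x <> 0.

Definition pos_def (Sigma : 'M[R]_k) : Prop :=
  Sigma^T = Sigma /\ forall x : 'cV[R]_k, x != 0 -> 0 < (x^T *m Sigma *m x) 0 0.

End Defs.

(* Main.v *)
Require Import Defs.
From HB Require Import structures.
From mathcomp Require Import all_boot all_order all_algebra.
From mathcomp Require Import ring lra.
Import Order.TTheory GRing.Theory Num.Theory.
Local Open Scope ring_scope.

Lemma mxDE (V : nmodType) m n (B C : 'M[V]_(m,n)) i j : (B + C) i j = B i j + C i j.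
Proof. by rewrite mxE. Qed.
Lemma mxNE (V : zmodType) m n (B : 'M[V]_(m,n)) i j : (- B) i j = - B i j.
Proof. by rewrite mxE. Qed.
Lemma mxBE (V : zmodType) m n (B C : 'M[V]_(m,n)) i j : (B - C) i j = B i j - C i j.
Proof. by rewrite mxDE mxNE. Qed.
Lemma mxZE (S : pzRingType) m n a (B : 'M[S]_(m,n)) i j : (a *: B) i j = a * B i j.
Proof. by rewrite mxE. Qed.

Lemma det_lemma (S : comNzRingType) n m (a : S) (U : 'M[S]_(n,m)) (V : 'M[S]_(m,n)) :
  a ^+ m * \det (a%:M + U *m V) = a ^+ n * \det (a%:M + V *m U).
Proof.
pose X := block_mx (a%:M : 'M_n) (-U) V (1%:M : 'M_m).
have h1 : \det X = \det (a%:M + U *m V).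
  have := congr1 determinant (mulmx_block 1%:M U 0 1%:M (a%:M : 'M_n) (-U) V 1%:M).
  rewrite det_mulmx det_ublock !det1 !mul1r => ->.
  by rewrite !mul1mx !mulmx1 !mul0mx !add0r addNr det_lblock det1 mulr1.
have h2 := congr1 determinant (mulmx_block 1%:M 0 (-V) (a%:M : 'M_m) (a%:M : 'M_n) (-U) V 1%:M).
rewrite det_mulmx det_lblock det1 mul1r det_scalar in h2.
rewrite -h1 h2 !mul1mx !mul0mx !addr0 mulmx1 mulNmx mul_scalar_mx mul_mx_scalar addNr.
by rewrite det_ublock det_scalar mulNmx mulmxN opprK addrC.
Qed.

Section A.
Variables (R : realFieldType) (k t : nat).

Lemma Tmat_ones (s : seqT k t) : Tmat R s *m ones R t = ones R k.
Proof.
apply/matrixP => j z; rewrite /Tmat /ones !mxE (bigD1 (s j)) //= big1 ?addr0.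
  by rewrite !mxE eqxx mulr1.
by move=> i /negPf ni; rewrite !mxE eq_sym ni mul0r.
Qed.

Lemma HmatT_ones (hk : (0 < k)%N) : (Hmat R k)^T *m ones R k = ones R k.
Proof.
apply/matrixP => i z; rewrite /Hmat /ones !mxE.
pose j0 : 'I_k := Ordinal (ltn_pmod i.+1 hk).
rewrite (bigD1 j0) //= big1 ?addr0.
  by rewrite !mxE modn_mod eqxx mulr1.
move=> j nj; rewrite !mxE modn_small //.
case: eqP => [hj|]; last by rewrite mul0r.
case/eqP: nj; apply: val_inj => /=; by rewrite hj.
Qed.
Lemma Hmat_ones (hk : (0 < k)%N) : Hmat R k *m ones R k = ones R k.
Proof.
apply/matrixP => i z; rewrite /Hmat /ones !mxE.
pose j0 : 'I_k := Ordinal (ltn_pmod (i + k.-1) hk).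
have hj0 : (i %% k == j0.+1 %% k)%N.
  have e : (j0.+1 = (i + k.-1) %% k + 1)%N by rewrite addn1.
  rewrite e modnDml -addnA addn1 prednK // modnDr //.
rewrite (bigD1 j0) //= big1 ?addr0.
  by rewrite !mxE hj0 mulr1.
move=> j nj; rewrite !mxE.
case: ifP => [hj|]; last by rewrite mul0r.
case/eqP: nj; apply: val_inj => /=.
move: hj0; rewrite (eqP hj).
have e1 : (j.+1 = j + 1)%N by rewrite addn1.
have e2 : (j0.+1 = j0 + 1)%N by rewrite addn1.
rewrite e1 e2 eqn_modDr => /eqP.
by rewrite (modn_small (ltn_ord j)) (modn_small (ltn_ord j0)).
Qed.
End A.

Section B.
Variables (R : realFieldType) (k : nat).
Implicit Types (x y : 'cV[R]_k) (A : 'M[R]_k).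

Definition bf A x y := (x^T *m A *m y) 0 0.

Lemma mx11M (a b : 'M[R]_1) : (a *m b) 0 0 = a 0 0 * b 0 0.
Proof. by rewrite mxE big_ord1. Qed.

Lemma bf_sym A x y : A^T = A -> bf A x y = bf A y x.
Proof.
move=> hA; rewrite /bf; transitivity ((x^T *m A *m y)^T 0 0); first by rewrite [RHS]mxE.
by rewrite !trmx_mul trmxK hA mulmxA.
Qed.

Lemma bfDl A x1 x2 y : bf A (x1 - x2) y = bf A x1 y - bf A x2 y.
Proof. by rewrite /bf linearB /= !mulmxBl mxBE. Qed.
Lemma bfDr A x y1 y2 : bf A x (y1 - y2) = bf A x y1 - bf A x y2.
Proof. by rewrite /bf !mulmxBr mxBE. Qed.
Lemma bfZl A a x y : bf A (a *: x) y = a * bf A x y.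
Proof. by rewrite /bf linearZ /= -!scalemxAl mxZE. Qed.
Lemma bfZr A a x y : bf A x (a *: y) = a * bf A x y.
Proof. by rewrite /bf -!scalemxAr mxZE. Qed.

Lemma posdef_unit (Sigma : 'M[R]_k) : pos_def Sigma -> Sigma \in unitmx.
Proof.
case=> hs hp; rewrite unitmxE unitfE; apply/negP => /det0P [v nv hv].
have := hp v^T; rewrite trmx_eq0 => /(_ nv); rewrite trmxK hv mul0mx mxE ltxx.
by [].
Qed.

Lemma posdef_inv (Sigma : 'M[R]_k) : pos_def Sigma -> pos_def (invmx Sigma).
Proof.
move=> hS; have hu := posdef_unit _ hS; case: hS => hs hp; split.
  by rewrite trmx_inv hs.
move=> x nx; pose y := invmx Sigma *m x.
have ny : y != 0.
  apply: contraNneq nx => hy; rewrite -[x]mul1mx -(mulmxV hu) -mulmxA.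
  by rewrite -/y hy mulmx0.
have := hp y ny; rewrite /y trmx_mul trmx_inv hs -!mulmxA (mulmxA Sigma) (mulmxV hu).
by rewrite mul1mx mulmxA.
Qed.

Lemma psd_of_pd A x : (forall x, x != 0 -> 0 < bf A x x) -> 0 <= bf A x x.
Proof.
move=> h; have [->|nx] := eqVneq x 0; last by apply/ltW/h.
by rewrite /bf mulmx0 mxE.
Qed.

Lemma cauchy A x y : A^T = A -> (forall x, x != 0 -> 0 < bf A x x) -> y != 0 ->
  bf A x y ^+ 2 / bf A y y <= bf A x x.
Proof.
move=> hs hp ny; have hy := hp y ny.
pose l := bf A x y / bf A y y.
have := @psd_of_pd A (x - l *: y) hp.
rewrite !bfDl !bfDr !bfZl !bfZr (@bf_sym A y x hs) /l.
have hy0 : bf A y y != 0 by rewrite gt_eqF.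
set a := bf A x x; set b := bf A x y; set c := bf A y y.
have -> : a - b / c * b - (b / c * b - b / c * (b / c * c)) = a - b ^+ 2 / c.
  by field.
by rewrite subr_ge0.
Qed.


Lemma ones_neq0 (hk : (0 < k)%N) : ones R k != 0.
Proof.
apply/eqP => /matrixP /(_ (Ordinal hk) 0); rewrite !mxE => /eqP; by rewrite oner_eq0.
Qed.

Lemma Btilde_ones (Sigma : 'M[R]_k) : pos_def Sigma -> (0 < k)%N ->
  Btilde Sigma *m ones R k = 0.
Proof.
move=> hS hk; have [hs hp] := posdef_inv _ hS.
have hpos := hp _ (ones_neq0 hk).
rewrite /Btilde mulmxBl -scalemxAl -!mulmxA.
set M := (ones R k)^T *m (invmx Sigma *m ones R k).
rewrite {2}[M]mx11_scalar mul_mx_scalar.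
rewrite -scalemxAr scalerA mulVf ?scale1r ?subrr //.
by rewrite /M mulmxA gt_eqF.
Qed.

Lemma Btilde_psd (Sigma : 'M[R]_k) x : pos_def Sigma -> (0 < k)%N ->
  0 <= bf (Btilde Sigma) x x.
Proof.
move=> hS hk; have [hs hp] := posdef_inv _ hS.
have := @cauchy _ x _ hs hp (ones_neq0 hk).
rewrite /bf /Btilde mulmxBr mulmxBl mxBE -scalemxAr -scalemxAl mxZE.
have e : x^T *m (invmx Sigma *m ones R k *m (ones R k)^T *m invmx Sigma) *m x
   = (x^T *m invmx Sigma *m ones R k) *m ((ones R k)^T *m invmx Sigma *m x)
  by rewrite !mulmxA.
rewrite e mx11M -/(bf _ x _) -/(bf _ (ones R k) x) (@bf_sym _ (ones R k) x hs).
rewrite -/(bf _ (ones R k) (ones R k)) -/(bf _ x x).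
move=> h; rewrite subr_ge0 -expr2 mulrC; exact: h.
Qed.

End B.
Arguments bf {R k}.
Arguments posdef_unit {R k}.
Arguments posdef_inv {R k}.
Arguments Btilde_ones {R k}.
Arguments Btilde_psd {R k}.
Arguments Tmat_ones {R k t}.
Arguments Hmat_ones {R k}.
Arguments HmatT_ones {R k}.
Arguments mx11M {R}.


Section C.
Variables (R : realFieldType) (k t : nat).

Lemma tr_psd (B : 'M[R]_k) (M : 'M[R]_(k, t)) :
  (forall x, 0 <= bf B x x) -> 0 <= \tr (M^T *m B *m M).
Proof.
move=> hB; rewrite /mxtrace; apply: sumr_ge0 => i _.
have -> : (M^T *m B *m M) i i = bf B (col i M) (col i M).
  rewrite /bf tr_col -row_mul !mxE; apply: eq_bigr => l _; by rewrite !mxE.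
exact: hB.
Qed.

Definition Jm : 'M[R]_t := const_mx 1.
Definition Pm : 'M[R]_t := 1%:M - (t%:R)^-1 *: Jm.

Lemma Jm_ones : Jm = ones R t *m (ones R t)^T.
Proof. apply/matrixP => i j; rewrite !mxE big_ord1 !mxE; by rewrite mulr1. Qed.

Lemma onesTones : (ones R t)^T *m ones R t = (t%:R)%:M.
Proof.
apply/matrixP => i j; rewrite (ord1 i) (ord1 j) !mxE.
under eq_bigr do rewrite !mxE mulr1.
by rewrite sumr_const card_ord.
Qed.

Lemma Jm_ones_mul : Jm *m ones R t = t%:R *: ones R t.
Proof.
by rewrite Jm_ones -mulmxA onesTones mul_mx_scalar.
Qed.

Lemma tr_Jm : \tr Jm = t%:R.
Proof. rewrite /mxtrace; under eq_bigr do rewrite mxE. by rewrite sumr_const card_ord. Qed.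

Lemma cs_form (A : 'M[R]_t) : (1 < t)%N -> completely_symmetric A ->
  A *m ones R t = 0 -> A = ((t.-1)%:R^-1 * \tr A) *: Pm.
Proof.
move=> ht [a [b ->]] h1.
have ht0 : (0 < t)%N by apply: ltnW.
have hab : a + b * t%:R = 0.
  move: h1; rewrite mulmxDl mul_scalar_mx -scalemxAl -/Jm Jm_ones_mul scalerA -scalerDl.
  move/matrixP => /(_ (Ordinal ht0) 0); rewrite !mxE mulr1 => ->. by [].
have htr : \tr (a%:M + b *: Jm) = a * t%:R + b * t%:R.
  by rewrite mxtraceD mxtrace_scalar mxtraceZ tr_Jm !mulr_natr.
rewrite -/Jm htr.
have hT : t%:R = (t.-1)%:R + 1 :> R by rewrite natr1 prednK.
have hT1 : (t.-1)%:R != 0 :> R by rewrite pnatr_eq0 -lt0n -ltnS prednK.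
have hT0 : t%:R != 0 :> R by rewrite pnatr_eq0 -lt0n.
have hb : b = - (a / t%:R).
  apply: (mulIf hT0); rewrite mulNr mulfVK //; apply/eqP; by rewrite -addr_eq0 addrC hab.
apply/matrixP => i j; rewrite /Pm !(mxDE, mxBE, mxZE) /Jm !mxE.
rewrite hb hT; move: hT1; set T := (t.-1)%:R => hT1.
have hT2 : T + 1 != 0.
  by rewrite -hT.
by case: (i == j) => /=; field; rewrite hT2 hT1.
Qed.

End C.

Section D.
Variables (R : realFieldType) (k t : nat).
Variables (Sigma : 'M[R]_k) (p : {ffun seqT k t -> R}).
Hypotheses (hk : (0 < k)%N) (ht : (1 < t)%N) (hS : pos_def Sigma).

Lemma G_ones s i : Gmat R s i *m ones R t = ones R k.
Proof.
rewrite /Gmat; case: ifP => _; first exact: Tmat_ones.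
case: ifP => _.
  by rewrite /Lmat -mulmxA Tmat_ones Hmat_ones.
by rewrite /Rmat -mulmxA Tmat_ones HmatT_ones.
Qed.

Lemma Cxi_ones i j : Cxi Sigma p i j *m ones R t = 0.
Proof.
rewrite /Cxi mulmx_suml big1 // => s _.
by rewrite -scalemxAl /Cs -mulmxA G_ones -mulmxA Btilde_ones // !mulmx0 scaler0.
Qed.

Lemma Cxi_form i j : pseudo_symmetric Sigma p ->
  Cxi Sigma p i j = ((t.-1)%:R^-1 * Vxi Sigma p i j) *: Pm R t.
Proof.
move=> hps; rewrite {1}(@cs_form R t _ ht (hps i j) (Cxi_ones i j)).
by rewrite /Vxi mxE.
Qed.

Lemma qform_expand (V : 'M[R]_3) u w :
  qform V u w = \sum_(i < 3) \sum_(j < 3) u i 0 * w j 0 * V i j.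
Proof.
rewrite /qform mxE exchange_big /=; apply: eq_bigr => j _.
rewrite mxE mulr_suml; apply: eq_bigr => i _.
by rewrite mxE; ring.
Qed.

Lemma Cuw_form u w : pseudo_symmetric Sigma p ->
  Cuw Sigma p u w = ((t.-1)%:R^-1 * qform (Vxi Sigma p) u w) *: Pm R t.
Proof.
move=> hps; rewrite qform_expand mulr_sumr scaler_suml /Cuw.
apply: eq_bigr => i _; rewrite mulr_sumr scaler_suml; apply: eq_bigr => j _.
by rewrite (Cxi_form _ _ hps) scalerA; congr (_ *: _); ring.
Qed.

End D.

Section E.
Variables (R : realFieldType) (t : nat).
Hypothesis (ht : (1 < t)%N).
Variable (tau : 'cV[R]_t).
Hypothesis (htau : (ones R t)^T *m tau = 0).

Lemma Pm_tau : Pm R t *m tau = tau.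
Proof.
by rewrite /Pm mulmxBl mul1mx -scalemxAl Jm_ones -mulmxA htau mulmx0 scaler0 subr0.
Qed.

Lemma PmT : (Pm R t)^T = Pm R t.
Proof. by rewrite /Pm linearB /= linearZ /= trmx1 /Jm trmx_const. Qed.

Lemma tauT_Pm : tau^T *m Pm R t = tau^T.
Proof. by rewrite -PmT -trmx_mul Pm_tau. Qed.

Lemma tauT_ones : tau^T *m ones R t = 0.
Proof. by rewrite -(trmxK (ones R t)) -trmx_mul htau trmx0. Qed.

Lemma n_pos : tau != 0 -> 0 < (tau^T *m tau) 0 0.
Proof.
move=> nt; have hn : (tau^T *m tau) 0 0 = \sum_i tau i 0 ^+ 2.
  rewrite mxE; apply: eq_bigr => i _; by rewrite mxE expr2.
rewrite hn lt_def sumr_ge0 ?andbT; last by move=> i _; rewrite sqr_ge0.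
apply: contraNneq nt => /eqP; rewrite psumr_eq0; last by move=> i _; rewrite sqr_ge0.
move=> /allP h; apply/eqP/matrixP => i j; rewrite (ord1 j) mxE.
by have := h i (mem_index_enum i); rewrite implyTb sqrf_eq0 => /eqP.
Qed.
End E.

Section F.
Variables (R : realFieldType) (t : nat).
Hypothesis (ht : (1 < t)%N).
Variable (tau : 'cV[R]_t).
Hypothesis (htau : (ones R t)^T *m tau = 0).

Lemma charpoly_form (c D : R) :
  char_poly (c *: Pm R t - D *: (tau *m tau^T))
  = 'X * ('X - (c - D * (tau^T *m tau) 0 0)%:P) * ('X - c%:P) ^+ (t - 2).
Proof.
have ht0 : t%:R != 0 :> R by rewrite pnatr_eq0 -lt0n ltnW.
set n := (tau^T *m tau) 0 0.
pose U0 : 'M[R]_(t, 1 + 1) := row_mx (ones R t) tau.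
pose V0 : 'M[R]_(1 + 1, t) := col_mx ((c / t%:R) *: (ones R t)^T) (D *: tau^T).
have hA : c *: Pm R t - D *: (tau *m tau^T) = c%:M - U0 *m V0.
  rewrite /U0 /V0 mul_row_col /Pm scalerBr scale_scalar_mx mulr1 scalerA Jm_ones.
  by rewrite -!scalemxAr opprD addrA.
have hVU : V0 *m U0 = block_mx (c%:M) 0 0 ((D * n)%:M).
  rewrite /U0 /V0 mul_col_row -!scalemxAl onesTones htau (@tauT_ones R t tau htau) !scaler0.
  rewrite scale_scalar_mx mulfVK //; congr block_mx.
  by rewrite [tau^T *m tau]mx11_scalar scale_scalar_mx.
set a : {poly R} := 'X - c%:P.
have ha : a != 0 by rewrite polyXsubC_eq0.
have hcp : char_poly_mx (c *: Pm R t - D *: (tau *m tau^T))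
    = a%:M + map_mx polyC U0 *m map_mx polyC V0.
  rewrite /char_poly_mx hA map_mxB map_scalar_mx -map_mxM /a raddfB /=.
  by rewrite opprK raddfB /= addrA.
have key := @det_lemma _ _ _ a (map_mx polyC U0) (map_mx polyC V0).
rewrite -[in RHS]map_mxM hVU map_block_mx !map_mx0 !map_scalar_mx /= in key.
rewrite [X in _ = _ * \det (X + _)](@scalar_mx_block _ 1 1) add_block_mx !addr0 det_ublock in key.
rewrite -!raddfD /= !det_scalar1 -hcp in key.
have e2 : (t = 2 + (t - 2))%N by rewrite subnKC.
apply: (mulfI (expf_neq0 2 ha)); rewrite /char_poly key {1}e2 exprD.
rewrite /a; set X := 'X; rewrite !polyCB; ring.
Qed.
End F.

Section G.
Variables (R : realFieldType) (k t : nat).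
Variables (Sigma : 'M[R]_k) (p : {ffun seqT k t -> R}).
Hypotheses (hk : (0 < k)%N) (ht : (1 < t)%N) (hS : pos_def Sigma).
Hypothesis hps : pseudo_symmetric Sigma p.
Variable lambda : R.

Lemma Ctilde_form tau : (ones R t)^T *m tau = 0 ->
  let ci := (t.-1)%:R^-1 in
  let V := Vxi Sigma p in
  Ctilde Sigma p lambda tau =
   (ci * qform V (ellv lambda) (ellv lambda)) *: Pm R t
   - ((ci * qform V (ellv lambda) (ell2 R)) ^+ 2
       * pinv1 (ci * qform V (ell2 R) (ell2 R) * (tau^T *m tau) 0 0))
     *: (tau *m tau^T).
Proof.
move=> htau ci V; rewrite /Ctilde /Ixi1 /=.
rewrite !(@Cuw_form R k t Sigma p hk ht hS _ _ hps) -/ci -/V.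
rewrite -!scalemxAl !(@Pm_tau R t tau htau) -!scalemxAr (@tauT_Pm R t tau htau).
rewrite -scalemxAl mxZE trmxK !linearZ /= -scalemxAl !scalerN !scalerA.
congr (_ - _ *: _); ring.
Qed.

Lemma Q2_ge0 : (forall s, 0 <= p s) -> 0 <= qform (Vxi Sigma p) (ell2 R) (ell2 R).
Proof.
move=> hp0; rewrite qform_expand.
have e : forall i j, Vxi Sigma p i j = \sum_s p s * \tr (Cs Sigma s i j).
  move=> i j; rewrite /Vxi mxE /Cxi raddf_sum; apply: eq_bigr => s _.
  exact: mxtraceZ.
under eq_bigr do under eq_bigr do rewrite e mulr_sumr.
under eq_bigr do rewrite exchange_big /=.
rewrite exchange_big /=; apply: sumr_ge0 => s _.
under eq_bigr do under eq_bigr do rewrite mulrCA.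
under eq_bigr do rewrite -mulr_sumr.
rewrite -mulr_sumr; apply: mulr_ge0 => //.
pose M := Lmat R s + Rmat R s.
have h := @tr_psd R k t (Btilde Sigma) M (fun x => Btilde_psd Sigma x hS hk).
have hell : forall i : 'I_3, ell2 R i 0 = if (i : nat) == 0%N then 0 else 1.
  by move=> i; rewrite /ell2 mxE.
rewrite !big_ord_recl !big_ord0 !hell /= /Cs /Gmat /=.
move: h; rewrite /M; move: (Btilde Sigma) (Lmat R s) (Rmat R s) (Tmat R s) => B L Rm T h.
rewrite [(_ + _)^T]linearD /= !mulmxDl !mulmxDr !mxtraceD in h.
rewrite !mul0r !mul1r !add0r !addr0.
lra.
Qed.
End G.


Theorem proposition5 (R : realFieldType) (k t : nat) (hk : (2 <= k)%N) (ht : (2 <= t)%N)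
    (Sigma : 'M[R]_k) (hSigma : pos_def Sigma)
    (p : {ffun seqT k t -> R}) (hp : is_measure p)
    (hps : pseudo_symmetric Sigma p) (lambda : R) :
  let V := Vxi Sigma p in
  let Q2 := qform V (ell2 R) (ell2 R) in
  let q2s := qform V (ellv lambda) (ellv lambda)
             - (qform V (ellv lambda) (ell2 R)) ^+ 2 * pinv1 Q2 in
  (forall tau : 'cV[R]_t, in_calT tau ->
     char_poly (Ctilde Sigma p lambda tau)
     = 'X * ('X - ((t.-1)%:R^-1 * q2s)%:P)
          * ('X - ((t.-1)%:R^-1 * qform V (ellv lambda) (ellv lambda))%:P) ^+ (t - 2)%N)
  /\ q2s <= qform V (ellv lambda) (ellv lambda).

Proof.
move=> V Q2 q2s.
have hk0 : (0 < k)%N by apply: leq_trans hk.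
have ht1 : (1 < t)%N by [].
have hci : (t.-1)%:R^-1 != 0 :> R.
  by rewrite invr_eq0 pnatr_eq0 -lt0n -ltnS prednK // ltnW.
split.
  move=> tau [htau ntau].
  rewrite (@Ctilde_form R k t Sigma p hk0 ht1 hSigma hps lambda tau htau) /=.
  rewrite (@charpoly_form R t ht1 tau htau).
  have hn := @n_pos R t tau (introN eqP ntau).
  set ci := (t.-1)%:R^-1.
  congr (_ * ('X - _%:P) * _).
  rewrite /q2s -/V -/Q2; set n := (tau^T *m tau) 0 0.
  rewrite /pinv1; have [->|hq] := eqVneq Q2 0.
    by rewrite mulr0 mul0r eqxx; ring.
  have hq' : ci * Q2 * n != 0 by rewrite !mulf_neq0 // gt_eqF.
  rewrite (negPf hq'); field.
  by rewrite hq (gt_eqF hn) /ci hci.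
have hQ := @Q2_ge0 R k t Sigma p hk0 hSigma (proj1 hp).
have hX : 0 <= qform V (ellv lambda) (ell2 R) ^+ 2 * pinv1 Q2.
  apply: mulr_ge0; first exact: sqr_ge0.
  by rewrite /pinv1; case: eqP => // _; rewrite invr_ge0.
rewrite /q2s -subr_ge0; move: hX; set X := (_ * pinv1 Q2) => hX.
suff -> : forall a : R, a - (a - X) = X by [].
by move=> a; ring.
Qed.
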